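(* Any routing labeling scheme for rooted trees on $n$ nodes needs labels of length $\log n+\Omega(\log\log n)$ bits. This holds even when restricted to the family of rooted trees on $n$ nodes in which every node has at most $2$ children. Precisely: there is a constant $c>0$ such that for all sufficiently large $n$, every routing labeling scheme for that family assigns, to some node of some tree in the family, a label of length at least $\log n+c\log\log n$.
   Context: All logarithms are base $2$. A (designer-port) routing labeling scheme for a family $\mathcal{T}$ of rooted trees consists of an encoder and a decoder. - The encoder is given $T\in\mathcal{T}$. It assigns a binary string (label) $\ell(u)$ to every node $u$. It also labels the edges from each node $u$ to its $\deg(u)$ children with distinct port numbers from $\{1,\dots,\deg(u)\}$; the encoder is free to choose these port numbers. - The decoder receives only $\ell(u)$ and $\ell(w)$ for nodes $u\neq w$ of some $T\in\mathcal{T}$; the value $\lceil\log n\rceil$, where $n=|T|$, may also be assumed known. It must return $0$ if the next node on the path from $u$ to $w$ is the parent of $u$. Otherwise it must return the port number of the first edge on that path. - The length of the scheme is the maximum label length over all trees in $\mathcal{T}$ and all their nodes. *)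

(* Defs.v *)
From mathcomp Require Import all_boot.
From Stdlib Require Import Reals.

Set Implicit Arguments.
Unset Strict Implicit.
Unset Printing Implicit Defensive.

Definition log2 (x : R) : R := (ln x / ln 2)%R.

(* A rooted tree on the node set 'I_n: a root and a parent function, the root
   being its own parent, such that every node reaches the root by iterating
   the parent map (so there are no other cycles). *)
Record rtree (n : nat) := RTree {
  rt_root : 'I_n;
  rt_par : 'I_n -> 'I_n;
  rt_par_root : rt_par rt_root = rt_root;
  rt_reach : forall v : 'I_n, exists k, iter k rt_par v = rt_root
}.

Definition is_child n (T : rtree n) (u v : 'I_n) : bool :=
  (v != rt_root T) && (rt_par T v == u).

Definition ndeg n (T : rtree n) (u : 'I_n) : nat := #|[pred v | is_child T u v]|.

Definition binary_tree n (T : rtree n) : Prop := forall u, ndeg T u <= 2.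

Definition in_subtree n (T : rtree n) (u w : 'I_n) : Prop :=
  exists k, iter k (rt_par T) w = u.

(* A port assignment gives, for every non-root node v, the port number of the
   edge from parent v to v.  Valid: the ports of the children of each u are
   distinct and lie in {1, ..., deg(u)}. *)
Definition valid_ports n (T : rtree n) (port : 'I_n -> nat) : Prop :=
  (forall v, v != rt_root T -> 0 < port v <= ndeg T (rt_par T v)) /\
  (forall v v', v != rt_root T -> v' != rt_root T ->
     rt_par T v = rt_par T v' -> port v = port v' -> v = v').

Definition routing_correct n (T : rtree n) (lab : 'I_n -> seq bool)
    (port : 'I_n -> nat) (dec : seq bool -> seq bool -> nat) : Prop :=
  forall u w : 'I_n, u != w ->
    (in_subtree T u w ->
       exists c, is_child T u c /\ in_subtree T c w /\ dec (lab u) (lab w) = port c) /\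
    (~ in_subtree T u w -> dec (lab u) (lab w) = 0).

(* A (designer-port) routing labeling scheme for n-node trees: an encoder
   (labels and ports for each tree) and a decoder.  The decoder may depend on
   n (hence on ceil(log n)). *)
Record scheme (n : nat) := Scheme {
  enc_lab : rtree n -> 'I_n -> seq bool;
  enc_port : rtree n -> 'I_n -> nat;
  dec : seq bool -> seq bool -> nat
}.

Definition binary_routing_scheme n (S : scheme n) : Prop :=
  forall T : rtree n, binary_tree T ->
    valid_ports T (enc_port S T) /\
    routing_correct T (enc_lab S T) (enc_port S T) (dec S).

(* Main.v *)
Require Import Defs.
From mathcomp Require Import all_boot.
From Stdlib Require Import Reals.
From Stdlib Require Import Lra.
From mathcomp Require Import zify.

Module Aux.
Import ssrnat.
Set Implicit Arguments. Unset Strict Implicit.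


Definition cparv (k v : nat) : nat := if v < k then v.-1 else v - k.
Lemma cparv_le k v : cparv k v <= v.
Proof. by rewrite /cparv; case: ifP => _; [exact: leq_pred | exact: leq_subr]. Qed.
Lemma cparv_lt k v : 0 < k -> 0 < v -> cparv k v < v.
Proof. move=> Hk Hv; rewrite /cparv; case: ifP => H; lia. Qed.

Definition cpar n k (v : 'I_n) : 'I_n := Ordinal (leq_ltn_trans (cparv_le k v) (ltn_ord v)).

Lemma cpar_root n k (Hn : 0 < n) (Hk : 0 < k) : cpar k (Ordinal Hn) = Ordinal Hn.
Proof. apply: val_inj => /=; rewrite /cparv Hk //. Qed.

Lemma iter_cpar_le n k (v : 'I_n) m : 0 < k -> nat_of_ord (iter m (cpar k) v) <= v - m.
Proof.
move=> Hk; elim: m => [|m IH] /=; first by rewrite subn0.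
set x := iter m (cpar k) v in IH *.
case: (posnP (nat_of_ord x)) => Hx.
  by rewrite /cparv Hx Hk /=.
have := cparv_lt Hk Hx. move: IH; rewrite /=. set y := cparv k x. set z := nat_of_ord x. lia.
Qed.

Lemma cpar_reach n k (Hn : 0 < n) (Hk : 0 < k) (v : 'I_n) :
  exists m, iter m (cpar k) v = Ordinal Hn.
Proof.
exists v; apply: val_inj => /=; have := iter_cpar_le v v Hk; rewrite subnn leqn0 => /eqP. done.
Qed.

Definition ctree n k (Hn : 0 < n) (Hk : 0 < k) : rtree n :=
  RTree (cpar_root Hn Hk) (cpar_reach Hn Hk).

Lemma card_inj_le n (A : {pred 'I_n}) (f : 'I_n -> nat) m :
  {in A &, injective f} -> (forall u, u \in A -> f u < m) -> #|A| <= m.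
Proof.
move=> Hi Hm; rewrite cardE -(size_map f) -(size_iota 0 m); apply: uniq_leq_size.
  rewrite map_inj_in_uniq ?enum_uniq // => x y; rewrite !mem_enum; exact: Hi.
move=> y /mapP [x]; rewrite mem_enum => /Hm Hx ->; rewrite mem_iota /=; lia.
Qed.




Lemma ctree_par n k (Hn : 0 < n) (Hk : 0 < k) v : nat_of_ord (rt_par (ctree Hn Hk) v) = cparv k v.
Proof. by []. Qed.

Lemma ctree_sub_le n k (Hn : 0 < n) (Hk : 0 < k) u w :
  in_subtree (ctree Hn Hk) u w -> nat_of_ord u <= nat_of_ord w.
Proof. move=> [m <-]; have := iter_cpar_le w m Hk; rewrite /=; lia. Qed.

Lemma ctree_sub_mod n k (Hn : 0 < n) (Hk : 0 < k) (u w : 'I_n) :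
  k <= u -> in_subtree (ctree Hn Hk) u w -> u %% k = w %% k.
Proof.
move=> Hu [m Hm].
have H : forall m, nat_of_ord (iter m (cpar k) w) < k \/ nat_of_ord (iter m (cpar k) w) %% k = w %% k.
  elim=> [|m' IH]; first by right.
  rewrite /= /cparv; set x := nat_of_ord (iter m' (cpar k) w) in IH *.
  case: ifP => Hx; first by left; lia.
  right; case: IH => [|<-]; first by lia.
  have E : x = (x - k) + k by lia.
  by rewrite [in RHS]E modnDr.
case: (H m); rewrite /= in Hm; rewrite Hm //; lia.
Qed.

Lemma iter_cpar_val n k (Hk : 0 < k) t (w : 'I_n) :
  k * t <= w -> nat_of_ord (iter t (cpar k) w) = w - k * t.
Proof.
elim: t => [|t IH] H; first by rewrite muln0 subn0.
rewrite /= IH; last by lia.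
rewrite /cparv; case: ifP => H2; lia.
Qed.

Lemma ctree_mod_sub n k (Hn : 0 < n) (Hk : 0 < k) (u w : 'I_n) :
  k <= u -> u <= w -> u %% k = w %% k -> in_subtree (ctree Hn Hk) u w.
Proof.
move=> Hu Huw Hm; exists (w %/ k - u %/ k); apply: val_inj.
have Ew := divn_eq w k; have Eu := divn_eq u k.
have Hq : u %/ k <= w %/ k by apply: leq_div2r.
rewrite /= iter_cpar_val //.
  rewrite mulnBr; nia.
rewrite mulnBr; nia.
Qed.

Lemma ctree_binary n k (Hn : 0 < n) (Hk : 0 < k) : binary_tree (ctree Hn Hk).
Proof.
move=> u; rewrite /ndeg; apply: (@card_inj_le _ _ (fun v : 'I_n => nat_of_bool (k <= v))).
  move=> v v'; rewrite !inE /is_child /= => /andP [Hv /eqP Pv] /andP [Hv' /eqP Pv'] E.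
  apply: val_inj.
  have Hv0 : val v != 0 by apply: contra Hv => /eqP H; apply/eqP/val_inj.
  have Hv0' : val v' != 0 by apply: contra Hv' => /eqP H; apply/eqP/val_inj.
  have E1 : cparv k v = u by rewrite -Pv.
  have E2 : cparv k v' = u by rewrite -Pv'.
  move: E1 E2 E Hv0 Hv0'; rewrite /cparv; case: (ltnP v k); case: (ltnP v' k) => //= *; lia.
by move=> v _; case: (k <= v).
Qed.

Lemma card_bigcup_le (T : finType) m (F : nat -> {set T}) :
  #|\bigcup_(i < m) F i| <= \sum_(i < m) #|F i|.
Proof.
elim: m => [|m IH]; first by rewrite !big_ord0 cards0.
rewrite !big_ord_recr /= cardsU; apply: (leq_trans (leq_subr _ _)); rewrite leq_add2r; exact: IH.
Qed.

Definition good (B : finType) n k (X : {set 'I_n}) (g : 'I_n -> B) (Rb : B -> B -> bool) :=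
  [/\ 0 < k, forall u, (u \in X) = (k <= u), {in X &, injective g} &
      forall u w, u \in X -> w \in X -> u != w -> Rb (g u) (g w) = (u %% k == w %% k)].

Lemma block_card n k (Hk : 0 < k) r : #|[set u : 'I_n | (k <= u) && (u %% k == r)]| <= n %/ k.
Proof.
apply: (@card_inj_le _ _ (fun u : 'I_n => u %/ k - 1)).
  move=> u v; rewrite !inE => /andP [Hu /eqP Hru] /andP [Hv /eqP Hrv] E; apply: val_inj => /=.
  have Eu := divn_eq u k; have Ev := divn_eq v k.
  have Hu1 : 1 <= u %/ k by rewrite divn_gt0.
  have Hv1 : 1 <= v %/ k by rewrite divn_gt0.
  have E2 : u %/ k = v %/ k by move: E => /= E; lia.
  by rewrite Eu Ev E2 Hru Hrv.
move=> u; rewrite inE => /andP [Hu _].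
have Hu1 : 1 <= u %/ k by rewrite divn_gt0.
have : u %/ k <= n %/ k by apply: leq_div2r; exact: ltnW.
lia.
Qed.

Lemma clique_bound (B : finType) n k X g Rb (C : {set B}) :
  @good B n k X g Rb -> C \subset g @: X ->
  (forall a b, a \in C -> b \in C -> a != b -> Rb a b) -> #|C| <= n %/ k.
Proof.
move=> [Hk HX Hinj Hrel] HC Hcl.
case: (set_0Vmem C) => [->|[a0 Ha0]]; first by rewrite cards0.
have /imsetP [u0 Hu0 Ea0] := subsetP HC a0 Ha0.
apply: (leq_trans _ (block_card n Hk (u0 %% k))).
apply: (leq_trans _ (leq_imset_card g _)).
apply: subset_leq_card; apply/subsetP => a Ha.
have /imsetP [u Hu Ea] := subsetP HC a Ha.
case: (eqVneq a a0) => [->|Hne].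
  by rewrite Ea0 imset_f // inE -HX Hu0 /=.
rewrite Ea imset_f // inE -HX Hu /=.
have Huu : u != u0 by apply: contra Hne => /eqP E; rewrite Ea Ea0 E.
by rewrite -Hrel // -Ea -Ea0 Hcl.
Qed.

Lemma inter_bound (B : finType) n ki kj Xi Xj gi gj Rb :
  @good B n ki Xi gi Rb -> @good B n kj Xj gj Rb ->
  #|gi @: Xi :&: gj @: Xj| <= ki * (n %/ kj).
Proof.
move=> Gi Gj; have [Hk HX Hinj Hrel] := Gi.
set Y := [set u in Xi | gi u \in gj @: Xj].
have H1 : gi @: Xi :&: gj @: Xj \subset gi @: Y.
  apply/subsetP => a; rewrite inE => /andP [/imsetP [u Hu ->] Hj].
  by apply: imset_f; rewrite inE Hu Hj.
apply: (leq_trans (subset_leq_card H1)); apply: (leq_trans (leq_imset_card _ _)).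
have H2 : Y \subset \bigcup_(r < ki) [set u in Y | u %% ki == r].
  apply/subsetP => u Hu; apply/bigcupP; exists (Ordinal (ltn_pmod u Hk)) => //.
  by rewrite inE Hu /=.
apply: (leq_trans (subset_leq_card H2)); apply: (leq_trans (card_bigcup_le ki (fun r : nat => [set u in Y | u %% ki == r]))) => /=.
rewrite -[X in X * _](card_ord ki) -sum_nat_const; apply: leq_sum => r _.
set Yr := [set u in Y | u %% ki == r].
have Hsub : Yr \subset Xi by apply/subsetP => u; rewrite !inE => /andP [/andP [->]].
have -> : #|Yr| = #|gi @: Yr|.
  by rewrite card_in_imset // => x y Hx Hy; apply: Hinj; apply: (subsetP Hsub).
apply: (clique_bound Gj).
  apply/subsetP => a /imsetP [u]; rewrite !inE => /andP [/andP [_ H] _] ->; exact: H.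
move=> a b /imsetP [u Hu ->] /imsetP [w Hw ->] Hne.
have Hne' : u != w by apply: contra Hne => /eqP ->.
move: Hu Hw; rewrite !inE => /andP [/andP [Hu _] /eqP Hur] /andP [/andP [Hw _] /eqP Hwr].
by rewrite Hrel // Hur Hwr.
Qed.

Definition Rs (dec : seq bool -> seq bool -> nat) s t := (dec s t != 0) || (dec t s != 0).
Definition Rb L (dec : seq bool -> seq bool -> nat) (a b : L.-bseq bool) := Rs dec (val a) (val b).

Lemma route_pos n (T : rtree n) lab port dec u w :
  valid_ports T port -> routing_correct T lab port dec -> u != w ->
  in_subtree T u w -> dec (lab u) (lab w) != 0.
Proof.
move=> [Hp _] Hc Huw Hs; have [H _] := Hc u w Huw.
have [c [Hch [_ ->]]] := H Hs.
move: Hch; rewrite /is_child => /andP [Hc0 _].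
by have /andP [Hpos _] := Hp c Hc0; rewrite -lt0n.
Qed.

Lemma route_zero n (T : rtree n) lab port dec u w :
  routing_correct T lab port dec -> u != w ->
  ~ in_subtree T u w -> dec (lab u) (lab w) = 0.
Proof. by move=> Hc Huw Hs; have [_ H] := Hc u w Huw; apply: H. Qed.

Lemma rel_lab n k (Hn : 0 < n) (Hk : 0 < k) lab port dec (u w : 'I_n) :
  valid_ports (ctree Hn Hk) port -> routing_correct (ctree Hn Hk) lab port dec ->
  k <= u -> k <= w -> u != w -> Rs dec (lab u) (lab w) = (u %% k == w %% k).
Proof.
move=> Hv Hc Hu Hw Huw; have Hwu : w != u by rewrite eq_sym.
case E: (u %% k == w %% k); move/eqP: E => E.
  rewrite /Rs; case: (leqP u w) => H.
    by rewrite (route_pos Hv Hc Huw (ctree_mod_sub Hn Hk Hu H E)).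
  by rewrite (route_pos Hv Hc Hwu (ctree_mod_sub Hn Hk Hw (ltnW H) (esym E))) orbT.
rewrite /Rs (route_zero Hc Huw) ?(route_zero Hc Hwu) //.
  by move=> /(ctree_sub_mod Hw) H; apply: E.
by move=> /(ctree_sub_mod Hu) H; apply: E.
Qed.

Lemma other_in_block n k (Hk : 0 < k) (u : 'I_n) :
  3 * k <= n -> k <= u -> exists x : 'I_n, [/\ k <= x, x != u & x %% k = u %% k].
Proof.
move=> H3 Hu; case: (leqP (2 * k) u) => H2.
  have Hx : u - k < n by have := ltn_ord u; lia.
  exists (Ordinal Hx); split => //=; first by lia.
    by apply/eqP => /(congr1 val) /=; lia.
  have E : nat_of_ord u = (u - k) + k by lia.
  by rewrite [in RHS]E modnDr.
have Hx : u + k < n by lia.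
exists (Ordinal Hx); split => //=; first by lia.
  by apply/eqP => /(congr1 val) /=; lia.
by rewrite modnDr.
Qed.

Lemma lab_inj n k (Hn : 0 < n) (Hk : 0 < k) lab port dec (u w : 'I_n) :
  valid_ports (ctree Hn Hk) port -> routing_correct (ctree Hn Hk) lab port dec ->
  3 * k <= n -> k <= u -> k <= w -> lab u = lab w -> u = w.
Proof.
move=> Hv Hc H3 Hu Hw El; apply/eqP; apply/negPn/negP => Huw.
have Hwu : w != u by rewrite eq_sym.
case E: (u %% k == w %% k); move/eqP: E => E.
  have Hne : nat_of_ord u != w by apply: contra Huw => /eqP Hv'; apply/eqP/val_inj.
  case: (leqP u w) => H.
    have P := route_pos Hv Hc Huw (ctree_mod_sub Hn Hk Hu H E).
    have Z : dec (lab w) (lab u) = 0.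
      by apply: (route_zero Hc Hwu) => /ctree_sub_le H'; lia.
    by rewrite El in P Z; rewrite Z in P.
  have P := route_pos Hv Hc Hwu (ctree_mod_sub Hn Hk Hw (ltnW H) (esym E)).
  have Z : dec (lab u) (lab w) = 0.
    by apply: (route_zero Hc Huw) => /ctree_sub_le H'; lia.
  by rewrite El in P Z; rewrite Z in P.
have [x [Hx Hxu Hxr]] := other_in_block Hk H3 Hu.
have Hxw : x != w by apply/eqP => Exw; apply: E; rewrite -Hxr Exw.
have := rel_lab Hv Hc Hx Hu Hxu; have := rel_lab Hv Hc Hx Hw Hxw.
rewrite El Hxr => ->; rewrite eqxx => /eqP; exact: E.
Qed.

Lemma family_good n k (Hn : 0 < n) (Hk : 0 < k) (S : scheme n) L :
  binary_routing_scheme S -> 3 * k <= n ->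
  (forall u, size (enc_lab S (ctree Hn Hk) u) <= L) ->
  good k [set u : 'I_n | k <= u] (fun u => insub_bseq L (enc_lab S (ctree Hn Hk) u)) (@Rb L (dec S)).
Proof.
move=> HS H3 HL; have [Hv Hc] := HS _ (ctree_binary Hn Hk).
have valg : forall u, val (insub_bseq L (enc_lab S (ctree Hn Hk) u)) = enc_lab S (ctree Hn Hk) u.
  by move=> u; rewrite /insub_bseq insubdK //; exact: HL.
split => //.
- by move=> u; rewrite inE.
- move=> u w; rewrite !inE => Hu Hw /(congr1 val); rewrite !valg => El.
  exact: (lab_inj Hv Hc H3 Hu Hw El).
- move=> u w; rewrite !inE => Hu Hw Huw; rewrite /Rb !valg; exact: (rel_lab Hv Hc Hu Hw Huw).
Qed.

Lemma card_setI_bigcup_le (T : finType) (A : {set T}) m (F : nat -> {set T}) :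
  #|A :&: \bigcup_(i < m) F i| <= \sum_(i < m) #|A :&: F i|.
Proof.
elim: m => [|m IH]; first by rewrite !big_ord0 setI0 cards0.
rewrite !big_ord_recr /= setIUr cardsU; apply: (leq_trans (leq_subr _ _)); rewrite leq_add2r; exact: IH.
Qed.

Lemma geom_sum j n : 15 * (\sum_(i < j) n %/ 16 ^ (j - i)) <= n.
Proof.
elim: j n => [|j IH] n; first by rewrite big_ord0.
rewrite big_ord_recr /= subSnn expn1.
have -> : \sum_(i < j) n %/ 16 ^ (j.+1 - widen_ord (leqnSn j) i) = \sum_(i < j) (n %/ 16) %/ 16 ^ (j - i).
  apply: eq_bigr => i _ /=; rewrite subSn; last exact: ltnW.
  by rewrite expnS divnMA.
have := IH (n %/ 16); have := leq_divM n 16; lia.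
Qed.

Lemma mul_div_le a b n : 0 < a -> 0 < b -> a * (n %/ (a * b)) <= n %/ b.
Proof.
move=> Ha Hb; rewrite leq_divRL // -mulnA mulnC -mulnA [b * a]mulnC.
exact: leq_divM.
Qed.

Lemma union_count (B : finType) n (U : nat -> {set B}) T :
  (forall j, j < T -> 3 * n <= 4 * #|U j|) ->
  (forall i j, i < j -> j < T -> #|U j :&: U i| <= n %/ 16 ^ (j - i)) ->
  T * n <= 2 * #|\bigcup_(j < T) U j|.
Proof.
move=> HU HI.
suff : forall t, t <= T -> t * n <= 2 * #|\bigcup_(j < t) U j| by apply.
elim=> [|t IH] Ht; first by rewrite mul0n.
rewrite big_ord_recr /= cardsU.
have H1 := IH (ltnW Ht); have H2 := HU t Ht.
have H3 : #|\bigcup_(j < t) U j :&: U t| <= \sum_(i < t) n %/ 16 ^ (t - i).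
  rewrite setIC; apply: (leq_trans (card_setI_bigcup_le _ _ _)).
  apply: leq_sum => i _; apply: HI => //; exact: ltn_ord.
have H4 := geom_sum t n.
have H5 : #|\bigcup_(j < t) U j :&: U t| <= #|U t| by apply: subset_leq_card; apply: subsetIr.
move: H1 H3 H4 H5.
set V := #|\bigcup_(j < t) U j|. set I := #|_ :&: _|. set Sm := \sum_(i < t) _.
move: H2; set Ut := #|U t|. lia.
Qed.

Lemma sum_pow2_lt m : \sum_(i < m) 2 ^ i < 2 ^ m.
Proof.
elim: m => [|m IH]; first by rewrite big_ord0.
rewrite big_ord_recr /=; have E : \sum_(i < m) 2 ^ (widen_ord (leqnSn m) i) = \sum_(i < m) 2 ^ i by []. rewrite E expnS; lia.
Qed.

Lemma card_bseq_bool L : #|{bseq L of bool}| < 2 ^ L.+1.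
Proof. by rewrite card_bseq card_bool; exact: sum_pow2_lt. Qed.


Lemma INR_expn2 k : INR (2 ^ k) = (pow 2 k)%R.
Proof.
elim: k => [|k IH]; first by rewrite expn0 /=.
rewrite expnS mulnE mult_INR IH /=; lra.
Qed.

Lemma ln_le (x y : R) : (0 < x)%R -> (x <= y)%R -> (ln x <= ln y)%R.
Proof.
move=> Hx [H|->]; [by left; apply: ln_increasing | by right].
Qed.

Lemma real_final (n p L : nat) :
  (2 <= n)%N -> (n < 2 ^ p.+1)%N -> ((p.+1) * 2 ^ (2 * p.+1) <= 2 ^ (2 * L))%N ->
  (log2 (INR n) + Rinv 2 * log2 (log2 (INR n)) <= INR L)%R.
Proof.
move=> Hn2 Hnp Hkey.
have l2 : (0 < ln 2)%R by rewrite -ln_1; apply: ln_increasing; lra.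
have Hn : (2 <= INR n)%R by have := le_INR _ _ (elimT leP Hn2); rewrite -[INR 2]/2%R.
have Hn' : (INR n <= pow 2 p.+1)%R.
  by rewrite -INR_expn2; apply: le_INR; apply/leP; apply: ltnW.
have A1 : (ln (INR n) <= INR p.+1 * ln 2)%R.
  rewrite -ln_pow; last lra.
  apply: ln_le => //; lra.
have A0 : (ln 2 <= ln (INR n))%R by apply: ln_le => //; lra.
have Hlog : (0 < log2 (INR n))%R.
  rewrite /log2; apply: Rdiv_lt_0_compat => //; lra.
have Hlog' : (log2 (INR n) <= INR p.+1)%R.
  rewrite /log2; apply: (Rmult_le_reg_r (ln 2)) => //.
  by rewrite /Rdiv Rmult_assoc Rinv_l; lra.
have Hp1 : (0 < INR p.+1)%R by apply: lt_0_INR; apply/ltP.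
have A2 : (ln (log2 (INR n)) <= ln (INR p.+1))%R by apply: ln_le.
have A3 : (ln (INR p.+1) + INR (2 * p.+1) * ln 2 <= INR (2 * L) * ln 2)%R.
  rewrite -!ln_pow; try lra.
  rewrite -ln_mult //; last by apply: pow_lt; lra.
  apply: ln_le; first by apply: Rmult_lt_0_compat => //; apply: pow_lt; lra.
  rewrite -!INR_expn2 -mult_INR; apply: le_INR; apply/leP; exact: Hkey.
rewrite !mult_INR in A3; rewrite -[INR 2]/2%R in A3.
rewrite /log2.
set a := ln (INR n); set b := ln (ln (INR n) / ln 2).
have E : (a / ln 2 + Rinv 2 * (b / ln 2) = (a + Rinv 2 * b) * Rinv (ln 2))%R by field; lra.
rewrite E.
have Hab : (a + Rinv 2 * b <= INR L * ln 2)%R.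
  rewrite /b -/(log2 (INR n)).
  have : (ln (INR n) <= INR (S p) * ln 2)%R := A1.
  rewrite /a. nra.
apply: (Rle_trans _ (INR L * ln 2 * Rinv (ln 2))).
  apply: Rmult_le_compat_r => //; left; apply: Rinv_0_lt_compat => //.
right; field; lra.
Qed.

Lemma main_aux :
  exists c : R, (0 < c)%R /\
  exists N : nat, forall n : nat, N <= n ->
    forall S : scheme n, binary_routing_scheme S ->
      exists T : rtree n, binary_tree T /\
        exists u : 'I_n,
          (log2 (INR n) + c * log2 (log2 (INR n)) <= INR (size (enc_lab S T u)))%R.
Proof.
exists (Rinv 2); split; first by apply: Rinv_0_lt_compat; lra.
exists (2 ^ 1100) => n HN S HS.
have Hp : 1100 <= trunc_log 2 n := trunc_log_max (isT : 1 < 2) HN.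
set p := trunc_log 2 n in Hp.
have Hn0 : 0 < n by apply: leq_trans HN; rewrite expn_gt0.
clear HN.
have Hn2p : 2 ^ p <= n := trunc_logP (isT : 1 < 2) Hn0.
have Hnp : n < 2 ^ p.+1 := trunc_log_ltn n (isT : 1 < 2).
have Hp2 : 2 ^ 2 <= 2 ^ p by rewrite leq_exp2l //; lia.
have Hn4 : 0 < n %/ 4 by rewrite divn_gt0 //; apply: leq_trans Hn2p.
set T := trunc_log 16 (n %/ 4).
have HT16 : 16 ^ T <= n %/ 4 := trunc_logP (isT : 1 < 16) Hn4.
have HT16' : n %/ 4 < 16 ^ T.+1 := trunc_log_ltn (n %/ 4) (isT : 1 < 16).
have HpT : p < 4 * T + 6.
  have H1 : 2 ^ (p - 2) <= n %/ 4.
    rewrite leq_divRL // -[4]/(2 ^ 2) -expnD subnK //; lia.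
  have H2 : 2 ^ (p - 2) < 2 ^ (4 * T.+1).
    by rewrite expnM; apply: leq_ltn_trans H1 HT16'.
  move: H2; rewrite ltn_exp2l //; lia.
have HT0 : 0 < T by lia.
pose k j := 16 ^ j.+1.
have kpos : forall j, 0 < k j by move=> j; rewrite /k expn_gt0.
pose tr j := ctree Hn0 (kpos j).
pose F := fun x : 'I_T * 'I_n => size (enc_lab S (tr x.1) x.2).
pose L := \max_(x : 'I_T * 'I_n) F x.
have Hcard : 0 < #|{: 'I_T * 'I_n}| by rewrite card_prod !card_ord muln_gt0 HT0 Hn0.
have [x0 Hx0] := eq_bigmax F Hcard.
exists (tr x0.1); split; first exact: ctree_binary.
exists x0.2.
have -> : size (enc_lab S (tr x0.1) x0.2) = L by rewrite /L Hx0.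
have HL : forall j, j < T -> forall u, size (enc_lab S (tr j) u) <= L.
  move=> j Hj u; have := @leq_bigmax _ F (Ordinal Hj, u); by [].
have H3k : forall j, j < T -> 4 * k j <= n.
  move=> j Hj; have : k j <= 16 ^ T by rewrite /k leq_exp2l.
  have := leq_divM n 4; lia.
pose g j u := insub_bseq L (enc_lab S (tr j) u).
pose X j := [set u : 'I_n | k j <= u].
pose U j := g j @: X j.
have Hgood : forall j, j < T -> good (k j) (X j) (g j) (@Rb L (dec S)).
  move=> j Hj; apply: family_good => //; first by have := H3k j Hj; lia.
  exact: HL.
have HU : forall j, j < T -> 3 * n <= 4 * #|U j|.
  move=> j Hj; have [_ _ Hinj _] := Hgood j Hj.
  rewrite /U card_in_imset //.
  have HC := cardsC (X j); rewrite card_ord in HC.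
  have : #|~: X j| <= k j.
    apply: (@card_inj_le _ _ (fun u : 'I_n => nat_of_ord u)).
      by move=> u w _ _; apply: val_inj.
    by move=> u; rewrite !inE -ltnNge.
  have := H3k j Hj; lia.
have HI : forall i j, i < j -> j < T -> #|U j :&: U i| <= n %/ 16 ^ (j - i).
  move=> i j Hij Hj; rewrite setIC.
  apply: (leq_trans (inter_bound (Hgood i (ltn_trans Hij Hj)) (Hgood j Hj))).
  have -> : k j = k i * 16 ^ (j - i) by rewrite /k -expnD; congr (_ ^ _); lia.
  by apply: mul_div_le; rewrite ?expn_gt0.
have HV := union_count HU HI.
have HV2 : #|\bigcup_(j < T) U j| < 2 ^ L.+1.
  apply: leq_ltn_trans (card_bseq_bool L); exact: max_card.
apply: (real_final (p := p)) => //.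
  by apply: leq_trans Hn2p; apply: leq_trans Hp2.
have HTn : T * 2 ^ p < 4 * 2 ^ L.
  apply: (leq_ltn_trans (leq_mul (leqnn T) Hn2p)).
  apply: (leq_ltn_trans HV); move: HV2; rewrite expnS; lia.
have HT274 : 274 <= T by lia.
have HTT : 64 * p.+1 <= T * T.
  have : 274 * T <= T * T by rewrite leq_mul2r HT274 orbT.
  lia.
have -> : 2 ^ (2 * p.+1) = 4 * (2 ^ p * 2 ^ p) by rewrite mulnC expnM (expnS 2 p); set Y := 2 ^ p; change ((2 * Y) * (2 * Y) = 4 * (Y * Y)); lia.
have -> : 2 ^ (2 * L) = 2 ^ L * 2 ^ L by rewrite mulnC expnM.
move: HTn HTT; set A := 2 ^ p; set B := 2 ^ L => HTn HTT.
have H1 : (T * A) * (T * A) < (4 * B) * (4 * B) by apply: ltn_mul.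
have H2 : (64 * p.+1) * (A * A) <= (T * T) * (A * A) by rewrite leq_mul2r HTT orbT.
have E1 : (T * A) * (T * A) = (T * T) * (A * A) by lia.
have E2 : (4 * B) * (4 * B) = 16 * (B * B) by lia.
rewrite E1 E2 in H1.
move: H1 H2; set AA := A * A; set BB := B * B; set TT := T * T; lia.
Qed.
End Aux.

Theorem mainTheorem9 :
  exists c : R, (0 < c)%R /\
  exists N : nat, forall n : nat, N <= n ->
    forall S : scheme n, binary_routing_scheme S ->
      exists T : rtree n, binary_tree T /\
        exists u : 'I_n,
          (log2 (INR n) + c * log2 (log2 (INR n)) <= INR (size (enc_lab S T u)))%R.
Proof. exact: Aux.main_aux. Qed.
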